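(* Let $\omega\ge0$ and let $\mathcal{T}$ be the scheme on $\mathcal{M}$ defined by $$\mathcal{T}(\mathbf{p})_{2i}=p_i,\qquad \mathcal{T}(\mathbf{p})_{2i+1}=M_{1/2}\big(M_{-2\omega}(p_i,p_{i-1}),\,M_{-2\omega}(p_{i+1},p_{i+2})\big),\quad i\in\mathbb{Z}.$$ Then $\delta(\mathcal{T}(\mathbf{p}))\le(4\omega+\tfrac12)\,\delta(\mathbf{p})$ for all manifold data $\mathbf{p}$. Consequently, for $0\le\omega<\tfrac18$ the scheme has a contractivity factor $\mu=4\omega+\tfrac12<1$ and is convergent (in particular for $\omega=\tfrac1{16}$, with $\mu=\tfrac34$).
   Context: $\mathcal{M}$ is a geodesically complete connected Riemannian manifold with distance $d$. $M_t(p_0,p_1)$ is the geodesic average: the point at parameter $t$ on a fixed minimal geodesic $\gamma$ with $\gamma(0)=p_0,\gamma(1)=p_1$, extended beyond $[0,1]$ for $t$ near $[0,1]$ (assumed defined for $t=-2\omega$), satisfying $d(p_0,M_t(p_0,p_1))=|t|d(p_0,p_1)$ and $d(M_t(p_0,p_1),p_1)=|1-t|d(p_0,p_1)$. Data $\mathbf{p}=(p_i)_{i\in\mathbb{Z}}$, $\delta(\mathbf{p})=\sup_id(p_i,p_{i+1})<\infty$. This scheme is the adaptation (via the symmetric geodesic inductive mean) of the linear 4-point scheme $f_{2i}\mapsto f_i$, $f_{2i+1}\mapsto-\omega(f_{i-1}+f_{i+2})+(\tfrac12+\omega)(f_i+f_{i+1})$. Convergence means: for every data $\mathbf{p}$ the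 curves $\mathrm{PG}_k(\mathcal{T}^k(\mathbf{p}))$ converge uniformly on $\mathbb{R}$, where $\mathrm{PG}_k(\mathbf{q})(t)=M_{2^kt-n}(q_n,q_{n+1})$ for $t\in[2^{-k}n,2^{-k}(n+1))$. *)

(* Defs.v *)
From Stdlib Require Import Reals ZArith.
Open Scope R_scope.

Definition is_metric {P : Type} (d : P -> P -> R) : Prop :=
  (forall x y, 0 <= d x y) /\
  (forall x y, d x y = 0 <-> x = y) /\
  (forall x y, d x y = d y x) /\
  (forall x y z, d x z <= d x y + d y z).

(* Completeness of the metric (Cauchy sequences converge). For a geodesically
   complete connected Riemannian manifold this holds by Hopf–Rinow. *)
Definition complete_metric {P : Type} (d : P -> P -> R) : Prop :=
  forall u : nat -> P,
    (forall eps, eps > 0 -> exists N : nat, forall m n : nat,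
        (N <= m)%nat -> (N <= n)%nat -> d (u m) (u n) < eps) ->
    exists l : P, forall eps, eps > 0 -> exists N : nat, forall n : nat,
        (N <= n)%nat -> d (u n) l < eps.

(* Geodesic average M t p0 p1 = gamma(t) on a fixed minimal geodesic from p0 to
   p1, with the distance identities for t in [0,1] and for t = -2 omega. *)
Definition geodesic_average {P : Type} (d : P -> P -> R)
    (M : R -> P -> P -> P) (omega : R) : Prop :=
  forall (p0 p1 : P) (t : R), (0 <= t <= 1 \/ t = - (2 * omega)) ->
    d p0 (M t p0 p1) = Rabs t * d p0 p1 /\
    d (M t p0 p1) p1 = Rabs (1 - t) * d p0 p1.

Definition data (P : Type) := Z -> P.

Definition disp {P : Type} (d : P -> P -> R) (p : data P) : R -> Prop :=
  fun x => exists i : Z, x = d (p i) (p (i + 1)%Z).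

Definition is_delta {P : Type} (d : P -> P -> R) (p : data P) (r : R) : Prop :=
  is_lub (disp d p) r.

Definition bounded_data {P : Type} (d : P -> P -> R) (p : data P) : Prop :=
  exists B : R, forall i : Z, d (p i) (p (i + 1)%Z) <= B.

(* The scheme T: T(p)_{2i} = p_i,
   T(p)_{2i+1} = M_{1/2}(M_{-2w}(p_i,p_{i-1}), M_{-2w}(p_{i+1},p_{i+2})).
   Z.div floors, so for j = 2i+1, j/2 = i. *)
Definition T4 {P : Type} (M : R -> P -> P -> P) (omega : R) (p : data P) : data P :=
  fun j : Z =>
    let i := (j / 2)%Z in
    if Z.even j then p i
    else M (1/2) (M (- (2 * omega)) (p i) (p (i - 1)%Z))
                 (M (- (2 * omega)) (p (i + 1)%Z) (p (i + 2)%Z)).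

Definition Titer {P : Type} (M : R -> P -> P -> P) (omega : R) (k : nat)
    (p : data P) : data P := Nat.iter k (T4 M omega) p.

(* PG_k(q)(t) = M_{2^k t - n}(q_n, q_{n+1}) for t in [2^-k n, 2^-k (n+1)),
   i.e. n = floor(2^k t) (Int_part is the floor). *)
Definition PG {P : Type} (M : R -> P -> P -> P) (k : nat) (q : data P) (t : R) : P :=
  let s := 2 ^ k * t in
  let n := Int_part s in
  M (s - IZR n) (q n) (q (n + 1)%Z).

Definition convergent {P : Type} (d : P -> P -> R) (M : R -> P -> P -> P)
    (omega : R) : Prop :=
  forall p : data P, bounded_data d p ->
    exists g : R -> P, forall eps, eps > 0 -> exists K : nat,
      forall (k : nat) (t : R), (K <= k)%nat ->
        d (PG M k (Titer M omega k p) t) (g t) < eps.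

(* Main.v *)
Require Import Defs.
From Stdlib Require Import Reals ZArith.
From Stdlib Require Import Lia Lra ClassicalEpsilon.
Open Scope R_scope.

Lemma T4_even {P : Type} (M : R -> P -> P -> P) w (q : data P) n :
  T4 M w q (2 * n)%Z = q n.
Proof.
  unfold T4. replace (2 * n / 2)%Z with n by (Z.div_mod_to_equations; lia).
  rewrite Z.even_mul. reflexivity.
Qed.

Lemma T4_odd {P : Type} (M : R -> P -> P -> P) w (q : data P) n :
  T4 M w q (2 * n + 1)%Z =
  M (1/2) (M (- (2 * w)) (q n) (q (n - 1)%Z))
          (M (- (2 * w)) (q (n + 1)%Z) (q (n + 2)%Z)).
Proof.
  unfold T4. replace ((2 * n + 1) / 2)%Z with n by (Z.div_mod_to_equations; lia).
  rewrite Z.even_add, Z.even_mul. reflexivity.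
Qed.

Section S.
Variables (P : Type) (d : P -> P -> R) (M : R -> P -> P -> P) (omega : R).
Hypothesis Hd : is_metric d.
Hypothesis HM : geodesic_average d M omega.
Hypothesis Homega : 0 <= omega.

Lemma odd_bounds (q : data P) B n :
  (forall i, d (q i) (q (i + 1)%Z) <= B) ->
  d (q n) (T4 M omega q (2 * n + 1)%Z) <= (4 * omega + 1/2) * B /\
  d (T4 M omega q (2 * n + 1)%Z) (q (n + 1)%Z) <= (4 * omega + 1/2) * B.
Proof.
  intros HB. destruct Hd as [Hpos [Hzero [Hsym Htri]]].
  rewrite T4_odd.
  set (a := M (- (2 * omega)) (q n) (q (n - 1)%Z)).
  set (b := M (- (2 * omega)) (q (n + 1)%Z) (q (n + 2)%Z)).
  set (c := M (1/2) a b).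
  assert (Hw : Rabs (- (2 * omega)) = 2 * omega).
  { rewrite Rabs_Ropp. apply Rabs_right. lra. }
  destruct (HM (q n) (q (n - 1)%Z) (- (2 * omega)) (or_intror eq_refl)) as [Ha _].
  destruct (HM (q (n + 1)%Z) (q (n + 2)%Z) (- (2 * omega)) (or_intror eq_refl)) as [Hb _].
  fold a in Ha. fold b in Hb. rewrite Hw in Ha, Hb.
  assert (H1 : 0 <= 1/2 <= 1 \/ 1/2 = - (2 * omega)) by (left; lra).
  destruct (HM a b (1/2) H1) as [Hc1 Hc2]. fold c in Hc1, Hc2.
  rewrite Rabs_right in Hc1 by lra. rewrite Rabs_right in Hc2 by lra.
  assert (E1 : d (q (n - 1)%Z) (q n) <= B).
  { pose proof (HB (n - 1)%Z) as h. replace (n - 1 + 1)%Z with n in h by lia. exact h. }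
  assert (E2 : d (q (n + 1)%Z) (q (n + 2)%Z) <= B).
  { pose proof (HB (n + 1)%Z) as h. replace (n + 1 + 1)%Z with (n + 2)%Z in h by lia. exact h. }
  assert (E3 : d (q n) (q (n + 1)%Z) <= B) by apply HB.
  rewrite Hsym in E1.
  assert (Hab : d a b <= d a (q n) + d (q n) (q (n + 1)%Z) + d (q (n + 1)%Z) b).
  { pose proof (Htri a (q n) b). pose proof (Htri (q n) (q (n + 1)%Z) b). lra. }
  rewrite (Hsym a (q n)) in Hab.
  pose proof (Hpos (q n) (q (n - 1)%Z)). pose proof (Hpos (q (n + 1)%Z) (q (n + 2)%Z)).
  split.
  - pose proof (Htri (q n) a c). nra.
  - pose proof (Htri c b (q (n + 1)%Z)) as HH. rewrite (Hsym b (q (n + 1)%Z)) in HH. nra.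
Qed.

Lemma T4_bound (q : data P) B :
  (forall i, d (q i) (q (i + 1)%Z) <= B) ->
  forall j, d (T4 M omega q j) (T4 M omega q (j + 1)%Z) <= (4 * omega + 1/2) * B.
Proof.
  intros HB j.
  destruct (odd_bounds q B (j / 2) HB) as [H1 H2].
  assert (Hj : j = (2 * (j / 2))%Z \/ j = (2 * (j / 2) + 1)%Z) by (Z.div_mod_to_equations; lia).
  set (n := (j / 2)%Z) in *. clearbody n.
  destruct Hj as [-> | ->].
  - rewrite T4_even. exact H1.
  - replace (2 * n + 1 + 1)%Z with (2 * (n + 1))%Z by lia. rewrite T4_even. exact H2.
Qed.

Lemma PG_near (q : data P) s :
  d (M (s - IZR (Int_part s)) (q (Int_part s)) (q (Int_part s + 1)%Z)) (q (Int_part s))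
  <= d (q (Int_part s)) (q (Int_part s + 1)%Z).
Proof.
  destruct Hd as [Hpos [Hzero [Hsym Htri]]].
  destruct (base_Int_part s) as [h1 h2].
  assert (Ht : 0 <= s - IZR (Int_part s) <= 1 \/ s - IZR (Int_part s) = - (2 * omega)) by (left; lra).
  destruct (HM (q (Int_part s)) (q (Int_part s + 1)%Z) _ Ht) as [Ha _].
  rewrite Hsym, Ha. rewrite Rabs_right by lra.
  pose proof (Hpos (q (Int_part s)) (q (Int_part s + 1)%Z)). nra.
Qed.

Lemma floor_double s :
  Int_part (2 * s) = (2 * Int_part s)%Z \/ Int_part (2 * s) = (2 * Int_part s + 1)%Z.
Proof.
  destruct (base_Int_part s) as [h1 h2].
  destruct (base_Int_part (2 * s)) as [h3 h4].
  assert (A : (2 * Int_part s - 1 < Int_part (2 * s))%Z).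
  { apply lt_IZR. rewrite minus_IZR, mult_IZR. simpl. lra. }
  assert (Bq : (Int_part (2 * s) < 2 * Int_part s + 2)%Z).
  { apply lt_IZR. rewrite plus_IZR, mult_IZR. simpl. lra. }
  lia.
Qed.

Lemma PG_step (q : data P) B B' k t :
  (forall i, d (q i) (q (i + 1)%Z) <= B) ->
  (forall i, d (T4 M omega q i) (T4 M omega q (i + 1)%Z) <= B') ->
  d (PG M (S k) (T4 M omega q) t) (PG M k q t) <= B + 2 * B'.
Proof.
  intros HB HB'. destruct Hd as [Hpos [Hzero [Hsym Htri]]].
  unfold PG. replace (2 ^ S k * t) with (2 * (2 ^ k * t)) by (simpl; ring).
  set (s := 2 ^ k * t). clearbody s.
  set (X := M (2 * s - IZR (Int_part (2 * s))) (T4 M omega q (Int_part (2 * s)))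
              (T4 M omega q (Int_part (2 * s) + 1)%Z)).
  set (Y := M (s - IZR (Int_part s)) (q (Int_part s)) (q (Int_part s + 1)%Z)).
  assert (HX : d X (T4 M omega q (Int_part (2 * s))) <= B').
  { pose proof (PG_near (T4 M omega q) (2 * s)) as h. fold X in h.
    pose proof (HB' (Int_part (2 * s))). lra. }
  assert (HY : d (q (Int_part s)) Y <= B).
  { pose proof (PG_near q s) as h. fold Y in h. rewrite Hsym in h.
    pose proof (HB (Int_part s)). lra. }
  assert (HZ : d (T4 M omega q (Int_part (2 * s))) (q (Int_part s)) <= B').
  { destruct (floor_double s) as [-> | ->].
    - rewrite T4_even, (proj2 (Hzero _ _) eq_refl).
      pose proof (HB' 0%Z). pose proof (Hpos (T4 M omega q 0%Z) (T4 M omega q (0+1)%Z)). lra.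
    - rewrite Hsym. pose proof (HB' (2 * Int_part s)%Z) as h. rewrite T4_even in h. exact h. }
  pose proof (Htri X (T4 M omega q (Int_part (2 * s))) Y).
  pose proof (Htri (T4 M omega q (Int_part (2 * s))) (q (Int_part s)) Y).
  lra.
Qed.

Lemma Titer_bound (p : data P) B :
  (forall i, d (p i) (p (i + 1)%Z) <= B) ->
  forall k i, d (Titer M omega k p i) (Titer M omega k p (i + 1)%Z) <= (4 * omega + 1/2) ^ k * B.
Proof.
  intros HB k. induction k as [|k IH]; intros i.
  - simpl. rewrite Rmult_1_l. apply HB.
  - change (Titer M omega (S k) p) with (T4 M omega (Titer M omega k p)).
    pose proof (T4_bound _ _ IH i). simpl. rewrite Rmult_assoc. exact H.
Qed.

End S.

Theorem mainTheorem7 (P : Type) (d : P -> P -> R) (M : R -> P -> P -> P)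
    (omega : R)
    (Hd : is_metric d) (Hcomplete : complete_metric d)
    (HM : geodesic_average d M omega) (Homega : 0 <= omega) :
  (forall (p : data P) (r : R), is_delta d p r ->
     exists r' : R, is_delta d (T4 M omega p) r' /\
                    r' <= (4 * omega + 1/2) * r) /\
  (omega < 1/8 -> 4 * omega + 1/2 < 1 /\ convergent d M omega).
Proof.
  split.
  - intros p r [Hub _].
    assert (HB : forall i, d (p i) (p (i + 1)%Z) <= r).
    { intros i. apply Hub. exists i. reflexivity. }
    pose proof (T4_bound P d M omega Hd HM Homega p r HB) as HT.
    assert (Hbd : bound (disp d (T4 M omega p))).
    { exists ((4 * omega + 1/2) * r). intros x [i ->]. apply HT. }
    assert (Hne : exists x, disp d (T4 M omega p) x).
    { exists (d (T4 M omega p 0%Z) (T4 M omega p (0 + 1)%Z)). exists 0%Z. reflexivity. }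
    destruct (completeness _ Hbd Hne) as [r' Hr'].
    exists r'. split; [exact Hr'|].
    apply (proj2 Hr'). intros x [i ->]. apply HT.
  - intros Hw. split; [lra|].
    intros p [B HB].
    pose proof Hd as Hd'. destruct Hd' as [Hpos [Hzero [Hsym Htri]]].
    set (mu := 4 * omega + 1/2).
    assert (Hmu0 : 0 < mu) by (unfold mu; lra).
    assert (Hmu1 : mu < 1) by (unfold mu; lra).
    assert (HB0 : 0 <= B) by (pose proof (HB 0%Z); pose proof (Hpos (p 0%Z) (p (0+1)%Z)); lra).
    set (u := fun k t => PG M k (Titer M omega k p) t).
    assert (Hstep : forall k t, d (u (S k) t) (u k t) <= 3 * (mu ^ k * B)).
    { intros k t. unfold u.
      pose proof (Titer_bound P d M omega Hd HM Homega p B HB k) as h1.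
      pose proof (T4_bound P d M omega Hd HM Homega _ _ h1) as h2.
      change (Titer M omega (S k) p) with (T4 M omega (Titer M omega k p)).
      pose proof (PG_step P d M omega Hd HM (Titer M omega k p) _ _ k t h1 h2).
      fold mu in H.
      assert (0 <= mu ^ k * B) by (apply Rmult_le_pos; [apply pow_le; lra | lra]).
      nra. }
    assert (Htele : forall k j t,
      d (u (k + j)%nat t) (u k t) <= 3 * B * (mu ^ k - mu ^ (k + j)) / (1 - mu)).
    { intros k j t. induction j as [|j IH].
      - rewrite Nat.add_0_r, (proj2 (Hzero _ _) eq_refl).
        replace (mu ^ k - mu ^ k) with 0 by ring. unfold Rdiv. lra.
      - replace (k + S j)%nat with (S (k + j)) by lia.
        pose proof (Hstep (k + j)%nat t).
        pose proof (Htri (u (S (k + j)) t) (u (k + j)%nat t) (u k t)).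
        replace (3 * B * (mu ^ k - mu ^ S (k + j)) / (1 - mu)) with
          (3 * (mu ^ (k + j) * B) + 3 * B * (mu ^ k - mu ^ (k + j)) / (1 - mu)).
        + lra.
        + simpl. field. lra. }
    set (C := 3 * B / (1 - mu) + 1).
    assert (HC : 0 < C).
    { unfold C. assert (0 <= 3 * B / (1 - mu)).
      { unfold Rdiv. apply Rmult_le_pos; [lra|]. apply Rlt_le, Rinv_0_lt_compat. lra. }
      lra. }
    assert (Hbnd : forall k j t, d (u (k + j)%nat t) (u k t) <= C * mu ^ k).
    { intros k j t. pose proof (Htele k j t).
      assert (0 <= mu ^ (k + j)) by (apply pow_le; lra).
      assert (0 <= mu ^ k) by (apply pow_le; lra).
      assert (3 * B * (mu ^ k - mu ^ (k + j)) / (1 - mu) <= 3 * B / (1 - mu) * mu ^ k).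
      { unfold Rdiv. assert (0 < / (1 - mu)) by (apply Rinv_0_lt_compat; lra).
        assert (0 <= 3 * B * / (1 - mu) * mu ^ (k + j)).
        { apply Rmult_le_pos; [apply Rmult_le_pos; lra|lra]. }
        nra. }
      unfold C. nra. }
    assert (Hsmall : forall y, 0 < y -> exists N, forall n, (N <= n)%nat -> C * mu ^ n < y).
    { intros y Hy.
      destruct (pow_lt_1_zero mu ltac:(rewrite Rabs_right; lra) (y / C)
                  ltac:(unfold Rdiv; apply Rmult_lt_0_compat; [lra|apply Rinv_0_lt_compat; lra]))
        as [N HN].
      exists N. intros n Hn. specialize (HN n Hn). rewrite Rabs_right in HN.
      - apply (Rmult_lt_compat_l C) in HN; [|lra].
        replace (C * (y / C)) with y in HN by (field; lra). exact HN.
      - apply Rle_ge, pow_le. lra. }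
    assert (Hlim : forall t, exists l, forall eps, eps > 0 -> exists N : nat,
               forall n : nat, (N <= n)%nat -> d (u n t) l < eps).
    { intros t. apply Hcomplete. intros eps Heps.
      destruct (Hsmall eps Heps) as [N HN]. exists N. intros m n Hm Hn.
      destruct (Nat.le_ge_cases m n) as [Hmn | Hmn].
      - replace n with (m + (n - m))%nat by lia. rewrite Hsym.
        pose proof (Hbnd m (n - m)%nat t). pose proof (HN m Hm). lra.
      - replace m with (n + (m - n))%nat by lia.
        pose proof (Hbnd n (m - n)%nat t). pose proof (HN n Hn). lra. }
    exists (fun t => proj1_sig (constructive_indefinite_description _ (Hlim t))).
    intros eps Heps.
    destruct (Hsmall (eps / 2) ltac:(lra)) as [K HK]. exists K.
    intros k t Hk.
    destruct (constructive_indefinite_description _ (Hlim t)) as [l Hl]. simpl.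
    destruct (Hl (eps / 2) ltac:(lra)) as [N HN].
    pose proof (HN (k + N)%nat ltac:(lia)).
    pose proof (Hbnd k N t). pose proof (HK k Hk).
    pose proof (Htri (u k t) (u (k + N)%nat t) l).
    rewrite Hsym in H0. fold (u k t). lra.
Qed.
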